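(* Let $\beta$ be a basis set in $x_1,\dots,x_r$ such that every non-standard arrow for $\beta$ is translation-equivalent to $0$. Let $x_j$ be a variable and $h$ a positive integer such that some monomial of $\beta$ is divisible by $x_j^h$, and let $\beta_t=\{m : x_j^h m\in\beta\}$ be the $x_j$-truncation of $\beta$ at height $h$. Then every non-standard arrow for $\beta_t$ is translation-equivalent to $0$ (with respect to $\beta_t$).
   Context: Monomials are identified with exponent vectors. A basis set is a finite nonempty set of monomials closed under taking divisors. For a basis set $\gamma$, an arrow for $\gamma$ is a pair $(\mathbf d,\mathbf j)$ with tail $\mathbf x^{\mathbf d}\notin\gamma$ and head $\mathbf x^{\mathbf j}\in\gamma$, written $c^{\mathbf d}_{\mathbf j}$; its vector is $\mathbf j-\mathbf d$; it is standard if the vector has exactly one negative component and non-standard otherwise. A translation step replaces $(\mathbf d,\mathbf j)$ by $(\mathbf d\pm e_i,\mathbf j\pm e_i)$ provided the result is again an arrow for $\gamma$ (nonnegative exponents, head in $\gamma$, tail not in $\gamma$); $\sim$ is the generated equivalence relation. An arrow $c$ is translation-equivalent to $0$ ($c\sim0$) if $c$ is translation-equivalent to an arrow $(\mathbf d',\mathbf j')$ with, for some $i$, $j'_i=0$, $d'_i\ge1$ and $\mathbf x^{\mathbf d'-e_i}\notin\gamma$. *)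

(* Defs.v *)
From mathcomp Require Import all_boot.
From Stdlib Require Import Relation_Operators.
Set Implicit Arguments. Unset Strict Implicit. Unset Printing Implicit Defensive.

(* Monomials in x_1..x_r, identified with exponent vectors. *)
Definition mono (r : nat) := {ffun 'I_r -> nat}.

Definition monoset (r : nat) := mono r -> bool.

Definition basis_set (r : nat) (B : monoset r) : Prop :=
  [/\ exists s : seq (mono r), forall m, B m -> m \in s,
      exists m, B m &
      forall m m' : mono r, B m -> (forall i, m' i <= m i) -> B m'].

(* an arrow c^d_j : tail d not in B, head j in B; we write it as the pair (d, j) *)
Definition arrow (r : nat) (B : monoset r) (c : mono r * mono r) : Prop :=
  ~~ B c.1 /\ B c.2.

(* its vector j - d has exactly one negative component iff standard *)
Definition standard (r : nat) (c : mono r * mono r) : Prop :=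
  #|[set i : 'I_r | c.2 i < c.1 i]| = 1.

Definition nonstandard (r : nat) (c : mono r * mono r) : Prop := ~ standard c.

Definition incr (r : nat) (m : mono r) (i : 'I_r) : mono r :=
  [ffun k => m k + (k == i)].

(* division by x_i (only used when m i >= 1) *)
Definition decr (r : nat) (m : mono r) (i : 'I_r) : mono r :=
  [ffun k => m k - (k == i)].

(* translation step: (d,j) <-> (d + e_i, j + e_i), both being arrows
   (the "-" direction is the reverse of a "+" step, which encodes
   nonnegativity of the exponents). *)
Definition tstep (r : nat) (B : monoset r) (c c' : mono r * mono r) : Prop :=
  arrow B c /\ arrow B c' /\
  exists i : 'I_r,
    (c' = (incr c.1 i, incr c.2 i)) \/ (c = (incr c'.1 i, incr c'.2 i)).

Definition tequiv (r : nat) (B : monoset r) : mono r * mono r -> mono r * mono r -> Prop :=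
  clos_refl_sym_trans _ (@tstep r B).

Definition tequiv0 (r : nat) (B : monoset r) (c : mono r * mono r) : Prop :=
  exists c' : mono r * mono r, tequiv B c c' /\ arrow B c' /\
    exists i : 'I_r, [/\ c'.2 i = 0, 1 <= c'.1 i & ~~ B (decr c'.1 i)].

Definition mulxpow (r : nat) (m : mono r) (j : 'I_r) (h : nat) : mono r :=
  [ffun k => m k + (k == j) * h].

Definition truncation (r : nat) (B : monoset r) (j : 'I_r) (h : nat) : monoset r :=
  fun m => B (mulxpow m j h).

(* Main.v *)
Require Import Defs.
From mathcomp Require Import all_boot.
From mathcomp Require Import zify.
From Stdlib Require Import Relation_Operators FunctionalExtensionality.
Set Implicit Arguments. Unset Strict Implicit. Unset Printing Implicit Defensive.

Section Generic.
Variable r : nat.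
Implicit Types (B : monoset r) (c : mono r * mono r).

Lemma tstep_sym B a b : tstep B a b -> tstep B b a.
Proof. by case=> [Ha [Hb [i Hi]]]; split=> //; split=> //; exists i; tauto. Qed.

Lemma tequiv_inv B (Q : mono r * mono r -> Prop) (G : Prop) :
  (forall a b, tstep B a b -> Q a -> Q b \/ G) ->
  forall a b, tequiv B a b -> (Q a -> Q b \/ G) /\ (Q b -> Q a \/ G).
Proof.
move=> HQ a b; elim=> {a b}.
- move=> a b Hab; split; first exact: HQ.
  by apply: HQ; apply: tstep_sym.
- by move=> a; split; left.
- by move=> a b _ [H1 H2]; split.
- move=> a b c _ [H1 H2] _ [H3 H4]; split.
  + by move=> /H1 [/H3|]; tauto.
  + by move=> /H4 [/H2|]; tauto.
Qed.

Lemma incr_lt (x y : mono r) i k : (incr y i k < incr x i k) = (y k < x k).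
Proof. by rewrite !ffunE ltn_add2r. Qed.

Lemma tequiv_lt B c c' : tequiv B c c' -> forall i, (c.2 i < c.1 i) = (c'.2 i < c'.1 i).
Proof.
elim=> {c c'}.
- move=> [x y] [x' y'] [_ [_ [k [[-> ->]|[-> ->]]]]] i /=; by rewrite incr_lt.
- by [].
- by move=> ? ? _ H i; rewrite H.
- by move=> ? ? ? _ H1 _ H2 i; rewrite H1 H2.
Qed.

Lemma nonstd_ext c c' : (forall i, (c.2 i < c.1 i) = (c'.2 i < c'.1 i)) ->
  nonstandard c -> nonstandard c'.
Proof.
move=> H; rewrite /nonstandard /standard.
have -> : [set i | c'.2 i < c'.1 i] = [set i | c.2 i < c.1 i].
  by apply/setP=> i; rewrite !inE H.
by [].
Qed.

Lemma decr_incr (m : mono r) i : decr (incr m i) i = m.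
Proof. by apply/ffunP=> k; rewrite !ffunE addnK. Qed.

End Generic.

Section Trunc.
Variables (r : nat) (j : 'I_r) (h : nat).

Definition sh (m : mono r) : mono r := mulxpow m j h.
Definition ush (m : mono r) : mono r := [ffun k => m k - (k == j) * h].

Lemma ushK (m : mono r) : ush (sh m) = m.
Proof. by apply/ffunP=> k; rewrite !ffunE addnK. Qed.

Lemma shK (m : mono r) : h <= m j -> sh (ush m) = m.
Proof.
move=> H; apply/ffunP=> k; rewrite !ffunE.
case: eqP => [->|_]; last by rewrite !mul0n subn0 addn0.
set a := m j in H *. lia.
Qed.

Lemma ush_incr (m : mono r) i : h <= m j -> ush (incr m i) = incr (ush m) i.
Proof.
move=> H; apply/ffunP=> k; rewrite !ffunE.
case: (@eqP _ k j) => [->|_]; last by rewrite !mul0n !subn0.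
set a := m j in H *. case: (j == i); lia.
Qed.

Lemma sh_incr (m : mono r) i : sh (incr m i) = incr (sh m) i.
Proof. by apply/ffunP=> k; rewrite !ffunE; lia. Qed.

Lemma sh_decr (m : mono r) i : 1 <= m i -> sh (decr m i) = decr (sh m) i.
Proof.
move=> H; apply/ffunP=> k; rewrite !ffunE.
case: (@eqP _ k i) => [->|_]; last by rewrite !subn0.
set a := m i in H *. case: (i == j); lia.
Qed.

Lemma ushE (m : mono r) k : ush m k = m k - (k == j) * h.
Proof. by rewrite ffunE. Qed.

Lemma shE (m : mono r) k : sh m k = m k + (k == j) * h.
Proof. by rewrite ffunE. Qed.

Lemma sh_ge (m : mono r) k : m k <= sh m k.
Proof. by rewrite shE leq_addr. Qed.

End Trunc.

Section Step.
Variables (r : nat) (B : monoset r) (j : 'I_r).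
Hypothesis Hcl : forall m m' : mono r, B m -> (forall i, m' i <= m i) -> B m'.
Hypothesis Hns : forall c, arrow B c -> nonstandard c -> tequiv0 B c.

Local Notation Bt := (truncation B j 1).
Local Notation sh1 := (sh j 1).
Local Notation ush1 := (ush j 1).

Lemma Bt_B (x : mono r) : Bt x -> B x.
Proof. move=> H; apply: Hcl H _ => i; exact: sh_ge. Qed.

Lemma notBt (x : mono r) : ~~ B x -> ~~ Bt x.
Proof. by apply: contra; apply: Bt_B. Qed.

Lemma arrow_t (x y : mono r) : arrow B (x, y) -> 1 <= x j -> 1 <= y j ->
  arrow Bt (ush1 x, ush1 y).
Proof.
move=> [H1 H2] hx hy; split; rewrite /truncation /= -/(sh j 1 _) shK //.
Qed.

Lemma arrow_t2 (x y : mono r) : arrow B (x, y) -> 1 <= y j -> arrow Bt (x, ush1 y).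
Proof.
move=> [H1 H2] hy; split; rewrite /=.
- exact: notBt.
- by rewrite /truncation -/(sh j 1 _) shK.
Qed.

Lemma ush_incr_j (m : mono r) : ush1 (incr m j) = m.
Proof.
apply/ffunP=> k; rewrite !ffunE.
by case: (k == j); rewrite /= ?muln1 ?mul0n ?addnK ?addn0 ?subn0.
Qed.

Lemma ush_ne (m : mono r) k : k != j -> ush1 m k = m k.
Proof. by move=> /negbTE H; rewrite ushE H mul0n subn0. Qed.


Lemma step_main c0 : arrow Bt c0 -> nonstandard c0 -> tequiv0 Bt c0.
Proof.
move=> Ha Hn.
pose G := tequiv0 Bt c0.
have P2 : forall D F : mono r, arrow B (D, F) -> 1 <= F j ->
    tequiv Bt c0 (D, ush1 F) -> nonstandard (D, F) -> G.
  move=> D F HaDF HF HeqDF Hns'.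
  have [c'' [Heq [Har [i [Hi1 Hi2 Hi3]]]]] := Hns HaDF Hns'.
  pose Q2 (c : mono r * mono r) :=
    arrow B c /\ 1 <= c.2 j /\ tequiv Bt c0 (c.1, ush1 c.2).
  have Hst : forall a b, tstep B a b -> Q2 a -> Q2 b \/ G.
    move=> [x y] [x' y'] [Hab [Hbb [i0 [[E1 E2]|[E1 E2]]]]] [_ [Hy Heq']];
      rewrite /Q2 /=; rewrite /= in Hy Heq'.
    - subst x' y'; left; split=> //; split; first by rewrite /= ffunE; lia.
      apply: rst_trans Heq' _; apply: rst_step; split; first exact: arrow_t2.
      split; first by apply: arrow_t2 => //; rewrite ffunE; lia.
      by exists i0; left; rewrite /= ush_incr.
    - subst x y; case: (boolP (1 <= y' j)) => Hy'.
      + left; split=> //; split=> //=.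
        apply: rst_trans Heq' _; apply: rst_step; split; first exact: arrow_t2.
        split; first exact: arrow_t2.
        by exists i0; right; rewrite /= ush_incr.
      + right.
        have Ei : i0 = j.
          move: Hy; rewrite ffunE; case: eqP => // _; rewrite addn0 => H.
          by rewrite H in Hy'.
        subst i0.
        exists (incr x' j, ush1 (incr y' j)); split => //; split; first exact: arrow_t2.
        exists j; split.
        * rewrite ushE !ffunE eqxx; lia.
        * rewrite ffunE eqxx; lia.
        * rewrite decr_incr; apply: notBt; by case: Hbb.
  have [H1 _] := tequiv_inv Hst Heq.
  case: (H1 (conj HaDF (conj HF HeqDF))) => [[HA [HB HC]] | //].
  have Hij : i != j by apply/eqP => E; rewrite -E Hi1 in HB.
  exists (c''.1, ush1 c''.2); split => //; split.
    by apply: arrow_t2 => //; case: (c'') HA.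
  exists i; split => //=.
  - by rewrite ush_ne.
  - by apply: notBt.
pose Q1 (c : mono r * mono r) :=
  arrow B c /\ 1 <= c.1 j /\ 1 <= c.2 j /\ tequiv Bt c0 (ush1 c.1, ush1 c.2).
have Hst : forall a b, tstep B a b -> Q1 a -> Q1 b \/ G.
  move=> [x y] [x' y'] [Hab [Hbb [i0 [[E1 E2]|[E1 E2]]]]] [_ [Hx [Hy Heq']]];
    rewrite /Q1 /=; rewrite /= in Hx Hy Heq'.
  - subst x' y'; left; split=> //; split; first by rewrite /= ffunE; lia.
    split; first by rewrite /= ffunE; lia.
    apply: rst_trans Heq' _; apply: rst_step; split; first exact: arrow_t.
    split; first by apply: arrow_t => //; rewrite ffunE; lia.
    by exists i0; left; rewrite /= !ush_incr.
  - subst x y; case: (boolP ((1 <= x' j) && (1 <= y' j))) => [/andP [Hx' Hy'] | Hn'].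
    + left; split=> //; split=> //; split=> //=.
      apply: rst_trans Heq' _; apply: rst_step; split; first exact: arrow_t.
      split; first exact: arrow_t.
      by exists i0; right; rewrite /= !ush_incr.
    + right.
      have Ei : i0 = j.
        apply/eqP; apply: contraR Hn' => /negbTE Hne.
        by move: Hx Hy; rewrite !ffunE eq_sym Hne !addn0 => -> ->.
      subst i0.
      move: Hx Hy Hn'; rewrite !ffunE eqxx => Hx Hy Hn'.
      case: (boolP (x' j == 0)) => [/eqP Hx0 | Hx0].
      *
        rewrite ush_incr_j in Heq'.
        apply: (P2 x' (incr y' j)) => //.
        -- by split; [case: Hbb | case: Hab].
        -- by rewrite ffunE eqxx.
        -- apply: nonstd_ext Hn => k /=; rewrite (tequiv_lt Heq' k) /=.
           case: (@eqP _ k j) => [->|/eqP Hkj]; first by rewrite Hx0 !ltn0.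
           by rewrite ush_ne.
      * have Hy0 : y' j = 0 by move: Hn' Hx0; case: (y' j) => //; lia.
        exists (ush1 (incr x' j), ush1 (incr y' j)); split => //; split.
          by apply: arrow_t => //; rewrite ffunE eqxx.
        exists j; split.
        -- by rewrite ushE !ffunE eqxx Hy0.
        -- rewrite ushE !ffunE eqxx; lia.
        -- rewrite /truncation /= -/(sh j 1 _) sh_decr; last first.
             rewrite ushE !ffunE eqxx; lia.
           by rewrite shK ?decr_incr; [case: Hbb | rewrite ffunE eqxx].
set c1 := c0.1. set c2 := c0.2.
have Ha' : arrow B (sh1 c1, sh1 c2) by exact: Ha.
have Hn2 : nonstandard (sh1 c1, sh1 c2).
  by apply: nonstd_ext Hn => k /=; rewrite !shE ltn_add2r.
have [c' [Heq [Har [i [Hi1 Hi2 Hi3]]]]] := Hns Ha' Hn2.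
have [H1 _] := tequiv_inv Hst Heq.
have Q0 : Q1 (sh1 c1, sh1 c2).
  split => //; split; first by rewrite shE eqxx; lia.
  split; first by rewrite shE eqxx; lia.
  by rewrite /= !ushK /c1 /c2 -surjective_pairing; apply: rst_refl.
case: (H1 Q0) => [[HA [HB [HC HD]]] | //].
have Hij : i != j by apply/eqP => E; rewrite -E Hi1 in HC.
exists (ush1 c'.1, ush1 c'.2); split => //; split.
  by apply: arrow_t => //; case: (c') HA.
exists i; split => //=.
- by rewrite ush_ne.
- by rewrite ush_ne.
- rewrite /truncation -/(sh j 1 _) sh_decr; last by rewrite ush_ne.
  by rewrite shK.
Qed.

End Step.

Definition Good (r : nat) (B : monoset r) :=
  (forall m m' : mono r, B m -> (forall i, m' i <= m i) -> B m') /\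
  (forall c, arrow B c -> nonstandard c -> tequiv0 B c).

Lemma good_trunc r (B : monoset r) (j : 'I_r) : Good B -> Good (truncation B j 1).
Proof.
move=> [Hcl Hns]; split.
- move=> m m' Hm Hle; apply: Hcl Hm _ => i; rewrite !ffunE leq_add2r; exact: Hle.
- exact: step_main.
Qed.

Lemma truncS r (B : monoset r) (j : 'I_r) h :
  truncation B j h.+1 = truncation (truncation B j h) j 1.
Proof.
apply: functional_extensionality => m; rewrite /truncation; congr B.
apply/ffunP => k; rewrite !ffunE; lia.
Qed.

Lemma trunc0 r (B : monoset r) (j : 'I_r) : truncation B j 0 = B.
Proof.
apply: functional_extensionality => m; rewrite /truncation.
have -> : mulxpow m j 0 = m by apply/ffunP => k; rewrite !ffunE muln0 addn0.
by [].
Qed.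

Theorem theorem7p2 (r : nat) (B : monoset r) (j : 'I_r) (h : nat) :
  basis_set B ->
  (forall c, arrow B c -> nonstandard c -> tequiv0 B c) ->
  0 < h ->
  (exists m : mono r, B m /\ h <= m j) ->
  forall c, arrow (truncation B j h) c -> nonstandard c ->
    tequiv0 (truncation B j h) c.
Proof.
move=> [_ _ Hcl] Hns _ _.
have : Good (truncation B j h).
  elim: h => [|h IH]; first by rewrite trunc0.
  by rewrite truncS; apply: good_trunc.
by case.
Qed.
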